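(* In the setting described in the context, consider the two problems $$(\mathrm{ACC})\ \max_{\boldsymbol\alpha}\min\Big\{\min_{(i,\theta_b)\in\Xi}W_i(\theta_b)G_i(\theta_b),\ \min_{i\ne i^*,\,\theta_b\in\Theta_{i^*}}G_i(\theta_b),\ \min_{\theta_b\notin\Theta_{i^*}}G_{i^*}(\theta_b)\Big\},$$ $$(\mathrm{FN})\ \max_{\boldsymbol\alpha}\min\Big\{\min_{(i,\theta_b)\in\Xi}W_i(\theta_b)G_i(\theta_b),\ \min_{\theta_b\notin\Theta_{i^*}}G_{i^*}(\theta_b)\Big\},$$ each subject to $\sum_{i,b}\alpha_i(\theta_b)=1$, $\alpha_i(\theta_b)\ge0$. An allocation $\boldsymbol\alpha$ is optimal for (ACC) (respectively (FN)) if and only if: (i) for all $1\le b\le B$, $\alpha_{i^b}^2(\theta_b)/\lambda_{i^b}^2(\theta_b)=\sum_{i\ne i^b}\alpha_i^2(\theta_b)/\lambda_i^2(\theta_b)$; and (ii) for all $(i,\theta_b),(j,\theta_{b'})\in\Xi\cup\Xi^{\mathrm{adv}}$, $W^{\mathrm{ACC}}_i(\theta_b)G_i(\theta_b)=W^{\mathrm{ACC}}_j(\theta_{b'})G_j(\theta_{b'})$ (respectively $W^{\mathrm{FN}}_i(\theta_b)G_i(\theta_b)=W^{\mathrm{FN}}_j(\theta_{b'})G_j(\theta_{b'})$).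
   Context: There are $k\ge2$ solutions and parameter values $\theta_1,\dots,\theta_B$ with probabilities $p_b>0$, $\sum_bp_b=1$. For each $i,b$: $y_i(\theta_b)\in\mathbb R$ and $\lambda_i(\theta_b)>0$. Each $i^b=\arg\min_iy_i(\theta_b)$ unique; $i^*=\arg\max_i\sum_bp_b\mathbf 1\{i=i^b\}$ unique; $\Theta_i=\{\theta_b:i^b=i\}$. For an allocation $\boldsymbol\alpha$ and $i\ne i^b$, $G_i(\theta_b)=\frac{(y_i(\theta_b)-y_{i^b}(\theta_b))^2}{2(\lambda_i^2(\theta_b)/\alpha_i(\theta_b)+\lambda^2_{i^b}(\theta_b)/\alpha_{i^b}(\theta_b))}$, set to $0$ if $\alpha_i(\theta_b)=0$ or $\alpha_{i^b}(\theta_b)=0$. Let $d_j=\sum_bp_b\mathbf 1\{i^*=i^b\}-\sum_bp_b\mathbf 1\{j=i^b\}$, $\Xi=\{(i,\theta_b):i\ne i^*,i\ne i^b\}$, $\Xi^{\mathrm{adv}}=\{(i^*,\theta_b):\theta_b\notin\Theta_{i^*}\}$. For $(i,\theta_b)\in\Xi$: $W_i(\theta_b)=\max\{\min(\min_{j\ne i^*}d_j,d_i/2)/p_b,1\}$ if $\theta_b\in\Theta_{i^*}$, and $W_i(\theta_b)=\max\{d_i/p_b,1\}$ if $\theta_b\notin\Theta_{i^*}$. Modified weights on $\Xi\cup\Xi^{\mathrm{adv}}$: $W^{\mathrm{ACC}}_i(\theta_b)=1$ if $\theta_b\in\Theta_{i^*}$ or $(i,\theta_b)\in\Xi^{\mathrm{adv}}$,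 and $W^{\mathrm{ACC}}_i(\theta_b)=W_i(\theta_b)$ if $(i,\theta_b)\in\Xi$ with $\theta_b\notin\Theta_{i^*}$; $W^{\mathrm{FN}}_i(\theta_b)=W_i(\theta_b)$ if $(i,\theta_b)\in\Xi$ and $=1$ if $(i,\theta_b)\in\Xi^{\mathrm{adv}}$; both are $\infty$ outside $\Xi\cup\Xi^{\mathrm{adv}}$. *)

(* Defs.v *)
(* with extended reals (mathcomp-reals' constructive_ereal)
   used only to take minima over finite (possibly empty) index sets. *)
From HB Require Import structures.
From mathcomp Require Import all_boot all_order all_algebra.
From mathcomp Require Import reals constructive_ereal.
Set Implicit Arguments. Unset Strict Implicit. Unset Printing Implicit Defensive.
Import Order.TTheory GRing.Theory Num.Theory.
Local Open Scope ring_scope.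

Section Defs.
Variables (R : realType) (k B : nat).
(* p b = probability of theta_b;  ib b = i^b;  istar = i^* *)
Variables (p : 'I_B -> R) (ib : 'I_B -> 'I_k) (istar : 'I_k).

Definition alloc := 'I_k -> 'I_B -> R.

Definition feasible (a : alloc) : Prop :=
  (forall i b, 0 <= a i b) /\ \sum_(i < k) \sum_(b < B) a i b = 1.

Definition mass (j : 'I_k) : R := \sum_(b < B | ib b == j) p b.

Definition dgap (j : 'I_k) : R := mass istar - mass j.

(* G_i(theta_b) (meaningful for i <> i^b) *)
Definition Gfun (y lam : 'I_k -> 'I_B -> R) (a : alloc) (i : 'I_k) (b : 'I_B) : R :=
  if (a i b == 0) || (a (ib b) b == 0) then 0
  else (y i b - y (ib b) b) ^+ 2 /
       (2 * (lam i b ^+ 2 / a i b + lam (ib b) b ^+ 2 / a (ib b) b)).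

Definition inXi (i : 'I_k) (b : 'I_B) : bool := (i != istar) && (i != ib b).
Definition inXiadv (i : 'I_k) (b : 'I_B) : bool := (i == istar) && (ib b != istar).

Definition mind (i : 'I_k) : R :=
  \big[Num.min/(dgap i / 2)]_(j < k | j != istar) dgap j.

Definition Wfun (i : 'I_k) (b : 'I_B) : R :=
  if ib b == istar then Num.max (mind i / p b) 1
  else Num.max (dgap i / p b) 1.

(* W^ACC and W^FN restricted to Xi \cup Xi^adv (they are +oo outside,
   but they are only used on Xi \cup Xi^adv) *)
Definition WACC (i : 'I_k) (b : 'I_B) : R :=
  if (ib b == istar) || inXiadv i b then 1 else Wfun i b.
Definition WFN (i : 'I_k) (b : 'I_B) : R :=
  if inXiadv i b then 1 else Wfun i b.

Local Open Scope ereal_scope.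

Definition objACC (y lam : 'I_k -> 'I_B -> R) (a : alloc) : \bar R :=
  mine (\big[mine/+oo]_(x : 'I_k * 'I_B | inXi x.1 x.2)
          (Wfun x.1 x.2 * Gfun y lam a x.1 x.2)%:E)
    (mine (\big[mine/+oo]_(x : 'I_k * 'I_B | (x.1 != istar) && (ib x.2 == istar))
             (Gfun y lam a x.1 x.2)%:E)
          (\big[mine/+oo]_(b < B | ib b != istar) (Gfun y lam a istar b)%:E)).

Definition objFN (y lam : 'I_k -> 'I_B -> R) (a : alloc) : \bar R :=
  mine (\big[mine/+oo]_(x : 'I_k * 'I_B | inXi x.1 x.2)
          (Wfun x.1 x.2 * Gfun y lam a x.1 x.2)%:E)
       (\big[mine/+oo]_(b < B | ib b != istar) (Gfun y lam a istar b)%:E).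

Definition optimal (obj : alloc -> \bar R) (a : alloc) : Prop :=
  feasible a /\ forall a' : alloc, feasible a' -> obj a' <= obj a.

Local Close Scope ereal_scope.

Definition balance (lam : 'I_k -> 'I_B -> R) (a : alloc) : Prop :=
  forall b : 'I_B,
    a (ib b) b ^+ 2 / lam (ib b) b ^+ 2 =
    \sum_(i < k | i != ib b) a i b ^+ 2 / lam i b ^+ 2.

Definition equalized (W : 'I_k -> 'I_B -> R) (y lam : 'I_k -> 'I_B -> R)
    (a : alloc) : Prop :=
  forall (i j : 'I_k) (b b' : 'I_B),
    inXi i b || inXiadv i b -> inXi j b' || inXiadv j b' ->
    W i b * Gfun y lam a i b = W j b' * Gfun y lam a j b'.

End Defs.

(* Main.v *)
Require Import Defs.
From HB Require Import structures.
From mathcomp Require Import all_boot all_order all_algebra.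
From mathcomp Require Import reals constructive_ereal.
From mathcomp Require Import all_classical all_reals all_analysis.
From mathcomp Require Import ring lra.
Set Implicit Arguments. Unset Strict Implicit. Unset Printing Implicit Defensive.
Import Order.TTheory GRing.Theory Num.Theory.
Import numFieldNormedType.Exports.
Local Open Scope ring_scope.
Section Core.
Variable R : realType.

Lemma core_id (c L M a bb x u : R) : 0 < L -> 0 < M -> 0 < a -> 0 < bb -> 0 < x -> 0 < u ->
  c / (2 * (L / a + M / bb)) * (x + (a ^+ 2 / L) / (bb ^+ 2 / M) * u)
  - (a + (a ^+ 2 / L) / (bb ^+ 2 / M) * bb) * (c / (2 * (L / x + M / u)))
  = c * M * a * (u * a - x * bb) ^+ 2 / (2 * bb * (L * bb + M * a) * (L * u + M * x)).
Proof.
move=> hL hM ha hb hx hu.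
have nL : L != 0 by rewrite gt_eqF. have nM : M != 0 by rewrite gt_eqF.
have na : a != 0 by rewrite gt_eqF. have nb : bb != 0 by rewrite gt_eqF.
have nx : x != 0 by rewrite gt_eqF. have nu : u != 0 by rewrite gt_eqF.
have h1 : L * bb + M * a != 0 by rewrite gt_eqF // addr_gt0 // mulr_gt0.
have h2 : L * u + M * x != 0 by rewrite gt_eqF // addr_gt0 // mulr_gt0.
have e3 : L / a + M / bb = (L * bb + M * a) / (a * bb).
  by field; rewrite na nb.
have e4 : L / x + M / u = (L * u + M * x) / (x * u).
  by field; rewrite nx nu.
rewrite e3 e4.
by field; rewrite ?nL ?nM ?na ?nb ?nx ?nu ?h1 ?h2.
Qed.

Lemma sum2_eq (I J : finType) (P : I -> pred J) (F H : I -> J -> R) :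
  (forall b i, P b i -> F b i <= H b i) ->
  \sum_b \sum_(i | P b i) H b i <= \sum_b \sum_(i | P b i) F b i ->
  forall b i, P b i -> F b i = H b i.
Proof.
move=> hle hs.
have e : \sum_b \sum_(i | P b i) (H b i - F b i) = 0.
  apply/le_anti/andP; split; last first.
    by apply: sumr_ge0 => b _; apply: sumr_ge0 => i hi; rewrite subr_ge0 hle.
  under eq_bigr do rewrite sumrB.
  by rewrite sumrB subr_le0.
move=> b i hi.
have h1 : forall b, true -> 0 <= \sum_(i | P b i) (H b i - F b i).
  by move=> b' _; apply: sumr_ge0 => i' hi'; rewrite subr_ge0 hle.
have e1 := psumr_eq0P h1 e.
have h2 : forall i, P b i -> 0 <= H b i - F b i by move=> i' hi'; rewrite subr_ge0 hle.
have := psumr_eq0P h2 (e1 b isT) hi.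
by move/eqP; rewrite subr_eq0 => /eqP.
Qed.

Lemma sum2_mull (I J : finType) (P : I -> pred J) (F : I -> J -> R) c :
  \sum_b \sum_(i | P b i) c * F b i = c * \sum_b \sum_(i | P b i) F b i.
Proof. by rewrite big_distrr; apply: eq_bigr => b _; rewrite big_distrr. Qed.

Lemma sum2_mulr (I J : finType) (P : I -> pred J) (F : I -> J -> R) c :
  \sum_b \sum_(i | P b i) F b i * c = (\sum_b \sum_(i | P b i) F b i) * c.
Proof. by rewrite big_distrl; apply: eq_bigr => b _; rewrite big_distrl. Qed.

Lemma sum_pos_exists (I : finType) (P : pred I) (F : I -> R) :
  (forall i, P i -> 0 <= F i) -> 0 < \sum_(i | P i) F i -> exists i, P i /\ 0 < F i.
Proof.
move=> h0 hs.
case: (boolP [exists i, P i && (0 < F i)]) => [/existsP [i /andP [] ]|/existsPn hn].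
  by exists i.
have : \sum_(i | P i) F i = 0.
  apply: big1 => i hi; apply/eqP; rewrite eq_le h0 // andbT.
  by move: (hn i); rewrite hi /= -leNgt.
by move=> e; rewrite e ltxx in hs.
Qed.

Local Open Scope classical_set_scope.
Lemma term_cont (M L K v : R) : K - M * v != 0 ->
  {for v, continuous (fun x : R => M * x ^+ 2 * L / (K - M * x) ^+ 2)}.
Proof.
move=> h.
apply: continuousM.
  apply: continuousM; last exact: cvg_cst.
  apply: continuousM; first exact: cvg_cst.
  exact: exprn_continuous.
apply: continuousV; first by rewrite expf_neq0.
apply: (@continuous_comp _ _ _ (fun x => K - M * x) (fun y => y ^+ 2)); last exact: exprn_continuous.
apply: continuousB; first exact: cvg_cst.
apply: continuousM; first exact: cvg_cst.
exact: cvg_id.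
Qed.

Lemma sum_cont (I : finType) (P : pred I) (f : I -> R -> R) v :
  (forall i, P i -> {for v, continuous (f i)}) ->
  {for v, continuous (fun x => \sum_(i | P i) f i x)}.
Proof.
move=> h; apply: cvg_big => //.
exact: add_continuous.
Qed.

Lemma col_exists (I : finType) (P : pred I) (M : R) (K L : I -> R) (j0 : I) :
  P j0 -> 0 < M -> (forall i, P i -> 0 < K i) -> (forall i, P i -> 0 < L i) ->
  exists v, 0 < v /\ (forall i, P i -> M * v < K i) /\
    \sum_(i | P i) M * v ^+ 2 * L i / (K i - M * v) ^+ 2 = 1.
Proof.
move=> Pj0 hM hK hL.
set h := fun x => \sum_(i | P i) M * x ^+ 2 * L i / (K i - M * x) ^+ 2.
have [i0 Pi0 hmin] : exists2 i0, P i0 & forall j, P j -> K i0 <= K j.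
  by case: (arg_minP K Pj0) => i Pi hi; exists i.
have hK0 := hK _ Pi0. have hL0 := hL _ Pi0.
set A := 1 + M / L i0.
have hA : 1 <= A by rewrite lerDl divr_ge0 // ltW.
have hA0 : 0 < A by apply: lt_le_trans hA.
set t := A / (1 + A).
have ht0 : 0 < t by rewrite divr_gt0 // addr_gt0.
have ht1 : t < 1.
  have h1A : 0 < 1 + A by rewrite addr_gt0.
  by rewrite /t ltr_pdivrMr // mul1r ltrDr.
set v1 := t * K i0 / M.
have hv10 : 0 < v1 by rewrite divr_gt0 // mulr_gt0.
have hMv1 : M * v1 = t * K i0 by rewrite /v1 mulrCA divff ?mulr1 // gt_eqF.
have hlt : forall i x, P i -> x <= v1 -> M * x < K i.
  move=> i x Pi hx; apply: (le_lt_trans (y := M * v1)); first by rewrite ler_pM2l.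
  rewrite hMv1; apply: (lt_le_trans (y := K i0)); last exact: hmin.
  by rewrite gtr_pMl.
have hterm0 : forall i x, P i -> 0 <= M * x ^+ 2 * L i / (K i - M * x) ^+ 2.
  move=> i x Pi; apply: divr_ge0; last exact: sqr_ge0.
  by apply: mulr_ge0; [apply: mulr_ge0; [exact: ltW | exact: sqr_ge0] | exact: ltW (hL i Pi)].
have h0 : h 0 = 0 by apply: big1 => i Pi; rewrite expr2 !mulr0 !mul0r.
have hv1 : 1 <= h v1.
  rewrite /h (bigD1 i0) //=.
  rewrite -[1]addr0; apply: lerD; last by apply: sumr_ge0 => i /andP [Pi _]; exact: hterm0.
  have -> : M * v1 ^+ 2 * L i0 / (K i0 - M * v1) ^+ 2 = 1 + (L i0 + M + M ^+ 2 / L i0) / M.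
    rewrite /v1 /t /A.
    have nM : M != 0 by rewrite gt_eqF.
    have nL : L i0 != 0 by rewrite gt_eqF.
    have nK : K i0 != 0 by rewrite gt_eqF.
    have nL2 : L i0 + M != 0 by rewrite gt_eqF // addr_gt0.
    have nA : 1 + (1 + M / L i0) != 0 by rewrite gt_eqF // addr_gt0.
    have n3 : L i0 + (L i0 + M) != 0 by rewrite gt_eqF // !addr_gt0.
    have n4 : K i0 * (L i0 + (L i0 + M)) - (L i0 + M) * K i0 != 0.
      have -> : K i0 * (L i0 + (L i0 + M)) - (L i0 + M) * K i0 = K i0 * L i0 by ring.
      by rewrite mulf_neq0.
    by field; rewrite nM nL n3 n4.
  rewrite lerDl; apply: divr_ge0; last exact: ltW.
  rewrite !addr_ge0 //; [exact: ltW | exact: ltW | apply: divr_ge0; [exact: sqr_ge0 | exact: ltW]].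
have hcont : {within `[0, v1], continuous h}.
  apply: continuous_in_subspaceT => x hx.
  move: hx; rewrite inE /= in_itv /= => /andP [hx0 hx1].
  apply: sum_cont => i Pi; apply: term_cont.
  by rewrite subr_eq0 gt_eqF // hlt.
have := @IVT R h 0 v1 1 (ltW hv10) hcont.
rewrite h0 ge_min le_max ler01 hv1 orbT /= => /(_ isT) [c].
rewrite in_itv /= => /andP [hc0 hc1] hc.
exists c; split; last by split => // i Pi; exact: hlt.
rewrite lt_def hc0 andbT; apply: contra_eqN hc => /eqP ->.
by rewrite h0 eq_sym oner_eq0.
Qed.
Local Close Scope classical_set_scope.
End Core.

Section Main.
Variables (R : realType) (k B : nat) (y lam : 'I_k -> 'I_B -> R) (ib : 'I_B -> 'I_k).
Hypotheses (hk : (2 <= k)%N) (hlam : forall i b, 0 < lam i b)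
  (hy : forall b i, i != ib b -> y (ib b) b < y i b).
Variable w : 'I_k -> 'I_B -> R.
Hypothesis hw : forall i b, i != ib b -> 0 < w i b.

Local Notation G := (Gfun ib y lam).
Definition cc i b := (y i b - y (ib b) b) ^+ 2.

Lemma cc_gt0 i b : i != ib b -> 0 < cc i b.
Proof. by move=> h; rewrite /cc exprn_gt0 // subr_gt0 hy. Qed.

Lemma G_eq (a : alloc R k B) i b : 0 < a i b -> 0 < a (ib b) b ->
  G a i b = cc i b / (2 * (lam i b ^+ 2 / a i b + lam (ib b) b ^+ 2 / a (ib b) b)).
Proof. by move=> h1 h2; rewrite /Gfun !gt_eqF. Qed.

Lemma G_ge0 (a : alloc R k B) i b : (forall i b, 0 <= a i b) -> 0 <= G a i b.
Proof.
move=> h; rewrite /Gfun; case: ifP => // _.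
by rewrite divr_ge0 ?sqr_ge0 // mulr_ge0 // addr_ge0 // divr_ge0 ?sqr_ge0.
Qed.

Lemma G_gt0 (a : alloc R k B) i b : i != ib b -> 0 < a i b -> 0 < a (ib b) b -> 0 < G a i b.
Proof.
move=> hi h1 h2; rewrite G_eq // divr_gt0 ?cc_gt0 // mulr_gt0 // addr_gt0 //.
  by rewrite divr_gt0 // exprn_gt0.
by rewrite divr_gt0 // exprn_gt0.
Qed.

Lemma G_nz (a : alloc R k B) i b : G a i b != 0 -> a i b != 0 /\ a (ib b) b != 0.
Proof.
rewrite /Gfun; case: ifP => [_|/negbT]; first by rewrite eqxx.
by rewrite negb_or => /andP.
Qed.

Lemma exists_other (j : 'I_k) : exists j' : 'I_k, j' != j.
Proof.
have h0 : (0 < k)%N by apply: leq_trans hk.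
have h1 : (1 < k)%N by [].
case: (eqVneq j (Ordinal h0)) => [->|hj]; last by exists (Ordinal h0); rewrite eq_sym.
by exists (Ordinal h1).
Qed.

Definition rho (a : alloc R k B) i b :=
  (a i b ^+ 2 / lam i b ^+ 2) / (a (ib b) b ^+ 2 / lam (ib b) b ^+ 2).
Definition Tt (a x : alloc R k B) i b := x i b + rho a i b * x (ib b) b.

Lemma core_G (a x : alloc R k B) i b : i != ib b -> 0 < a i b -> 0 < a (ib b) b ->
  (forall i b, 0 <= x i b) ->
  Tt a a i b * G x i b <= G a i b * Tt a x i b /\
  (Tt a a i b * G x i b = G a i b * Tt a x i b -> 0 < G x i b ->
     x (ib b) b * a i b = x i b * a (ib b) b).
Proof.
move=> hi ha hb hx.
have hrho : 0 <= rho a i b.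
  by rewrite /rho divr_ge0 // divr_ge0 ?sqr_ge0.
case: (boolP ((x i b == 0) || (x (ib b) b == 0))) => [hz|].
  have -> : G x i b = 0 by rewrite /Gfun hz.
  rewrite mulr0 ltxx; split => //.
  apply: mulr_ge0; first exact: (ltW (G_gt0 hi ha hb)).
  by rewrite addr_ge0 ?hx // mulr_ge0 ?hx.
rewrite negb_or => /andP [nx nu].
have px : 0 < x i b by rewrite lt_def nx hx.
have pu : 0 < x (ib b) b by rewrite lt_def nu hx.
rewrite /Tt (G_eq px pu) (G_eq ha hb).
have hL : 0 < lam i b ^+ 2 by rewrite exprn_gt0.
have hM : 0 < lam (ib b) b ^+ 2 by rewrite exprn_gt0.
have := core_id (cc i b) hL hM ha hb px pu.
have hd : 0 < 2 * a (ib b) b * (lam i b ^+ 2 * a (ib b) b + lam (ib b) b ^+ 2 * a i b)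
   * (lam i b ^+ 2 * x (ib b) b + lam (ib b) b ^+ 2 * x i b).
  apply: mulr_gt0; last by apply: addr_gt0; apply: mulr_gt0.
  apply: mulr_gt0; last by apply: addr_gt0; apply: mulr_gt0.
  by apply: mulr_gt0.
rewrite /rho => e; split.
  rewrite -subr_ge0 e; apply: divr_ge0.
    by rewrite mulr_ge0 ?sqr_ge0 // mulr_ge0 ?(ltW ha) // mulr_ge0 ?(ltW hM) // ltW ?cc_gt0.
  exact: ltW.
move=> heq _; move: e; rewrite heq subrr => /esym /eqP.
have ny : (y i b - y (ib b) b == 0) = false by rewrite gt_eqF // subr_gt0 hy.
have nl : (lam (ib b) b == 0) = false by rewrite gt_eqF.
rewrite mulf_eq0 invr_eq0 (gt_eqF hd) orbF !mulf_eq0 ny nl (gt_eqF ha) /= ?orbb.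
by rewrite subr_eq0 => /eqP.
Qed.


Definition eqz (a : alloc R k B) := forall i j b b', i != ib b -> j != ib b' ->
  w i b * G a i b = w j b' * G a j b'.

Lemma rho_sum (a : alloc R k B) b : balance ib lam a -> 0 < a (ib b) b ->
  \sum_(i | i != ib b) rho a i b = 1.
Proof.
move=> hbal hb; rewrite /rho -big_distrl /= -(hbal b) mulfV // gt_eqF //.
by rewrite divr_gt0 // exprn_gt0.
Qed.

Lemma Tt_col (a x : alloc R k B) b : balance ib lam a -> 0 < a (ib b) b ->
  \sum_(i | i != ib b) Tt a x i b = \sum_i x i b.
Proof.
move=> hbal hb; rewrite /Tt big_split /= -big_distrl /= rho_sum // mul1r.
by rewrite [RHS](bigD1 (ib b)) //= addrC.
Qed.

Lemma Tt_tot (a x : alloc R k B) : balance ib lam a -> (forall b, 0 < a (ib b) b) ->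
  feasible x -> \sum_b \sum_(i | i != ib b) Tt a x i b = 1.
Proof.
move=> hbal hb [_ hs].
under eq_bigr do rewrite Tt_col //.
by rewrite exchange_big.
Qed.

Lemma pos_of (a : alloc R k B) : feasible a -> balance ib lam a -> eqz a ->
  exists z, 0 < z /\ (forall i b, i != ib b -> w i b * G a i b = z) /\
            (forall i b, 0 < a i b).
Proof.
case=> ha0 hs hbal heq.
have [i0 [b0 h0]] : exists i b, 0 < a i b.
  have hn1 : forall i : 'I_k, true -> 0 <= \sum_b a i b.
    by move=> i _; apply: sumr_ge0 => b _.
  have hp : 0 < \sum_i \sum_b a i b by rewrite hs ltr01.
  have [i [_ hi]] := sum_pos_exists hn1 hp.
  have hn2 : forall b : 'I_B, true -> 0 <= a i b by move=> b _.
  have [b [_ hb]] := sum_pos_exists hn2 hi.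
  by exists i, b.
have hn : forall i, i != ib b0 -> 0 <= a i b0 ^+ 2 / lam i b0 ^+ 2.
  by move=> i _; rewrite divr_ge0 ?sqr_ge0.
have hib : 0 < a (ib b0) b0.
  case: (eqVneq i0 (ib b0)) => [<-//|hne].
  rewrite lt_def ha0 andbT; apply/eqP => hz.
  have := hbal b0; rewrite hz.
  have -> : (0:R) ^+ 2 = 0 by rewrite expr2 mulr0.
  rewrite mul0r => /esym e.
  have := psumr_eq0P hn e hne.
  by move/eqP; rewrite gt_eqF // divr_gt0 // exprn_gt0.
have [i1 [hi1 hp1]] : exists i1, i1 != ib b0 /\ 0 < a i1 b0.
  have hp : 0 < \sum_(i < k | i != ib b0) a i b0 ^+ 2 / lam i b0 ^+ 2.
    by rewrite -hbal divr_gt0 // exprn_gt0.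
  have [i [hi hpi]] := sum_pos_exists hn hp.
  exists i; split => //; rewrite lt_def ha0 andbT; apply: contraTneq hpi => ->.
  by rewrite expr2 mulr0 mul0r ltxx.
set z := w i1 b0 * G a i1 b0.
have hz : 0 < z by rewrite mulr_gt0 ?hw // G_gt0.
have hval : forall i b, i != ib b -> w i b * G a i b = z.
  by move=> i b hi; apply: heq.
exists z; split => //; split => // i b.
have hG : forall j, j != ib b -> a j b != 0 /\ a (ib b) b != 0.
  move=> j hj; apply: G_nz; apply: contraTneq hz => hG0.
  by rewrite -(hval j b hj) hG0 mulr0 ltxx.
case: (eqVneq i (ib b)) => [->|hi].
  have [j hj] := exists_other (ib b).
  by have [_ h] := hG j hj; rewrite lt_def h ha0.
by have [h _] := hG i hi; rewrite lt_def h ha0.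
Qed.

Section Key.
Variables (a0 x : alloc R k B) (z : R).
Hypotheses (hf0 : feasible a0) (hb0 : balance ib lam a0) (hp0 : forall i b, 0 < a0 i b)
  (hz : forall i b, i != ib b -> w i b * G a0 i b = z) (hfx : feasible x).

Let hx0 : forall i b, 0 <= x i b. Proof. by case: hfx. Qed.

Let hcore : forall b i, i != ib b ->
  Tt a0 a0 i b * (w i b * G x i b) <= z * Tt a0 x i b.
Proof.
move=> b i hi; have [c1 _] := core_G hi (hp0 i b) (hp0 _ b) hx0.
rewrite -(hz hi) mulrCA -mulrA; apply: ler_wpM2l; first exact: ltW (hw hi).
exact: c1.
Qed.

Let hth : \sum_b \sum_(i | i != ib b) Tt a0 a0 i b = 1.
Proof. by apply: Tt_tot => //. Qed.

Let hT : \sum_b \sum_(i | i != ib b) Tt a0 x i b = 1.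
Proof. by apply: Tt_tot => //. Qed.

Let hthp : forall i b, 0 < Tt a0 a0 i b.
Proof.
move=> i b; rewrite /Tt addr_gt0 // mulr_gt0 // /rho divr_gt0 // divr_gt0 // exprn_gt0 //.
Qed.

Lemma key (e : R) : (forall i b, i != ib b -> e <= w i b * G x i b) -> e <= z.
Proof.
move=> he.
have -> : e = \sum_b \sum_(i | i != ib b) Tt a0 a0 i b * e.
  rewrite -[LHS]mul1r -hth big_distrl /=; apply: eq_bigr => b _.
  by rewrite big_distrl.
apply: (@le_trans _ _ (\sum_b \sum_(i | i != ib b) z * Tt a0 x i b)); last first.
  suff -> : \sum_b \sum_(i | i != ib b) z * Tt a0 x i b =
     z * \sum_b \sum_(i | i != ib b) Tt a0 x i b by rewrite hT mulr1.
  by rewrite big_distrr; apply: eq_bigr => b _; rewrite big_distrr.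
apply: ler_sum => b _; apply: ler_sum => i hi.
apply: le_trans (hcore hi); apply: ler_wpM2l; first exact: ltW.
exact: he.
Qed.

Lemma key_eq : 0 < z -> (forall i b, i != ib b -> z <= w i b * G x i b) ->
  forall i b, i != ib b -> w i b * G x i b = z /\
    x (ib b) b * a0 i b = x i b * a0 (ib b) b.
Proof.
move=> hz0 hge.
have s1 : forall b i, i != ib b -> Tt a0 a0 i b * z = Tt a0 a0 i b * (w i b * G x i b).
  apply: sum2_eq.
    by move=> b i hi; apply: ler_wpM2l; [exact: ltW | exact: hge].
  apply: (@le_trans _ _ (\sum_b \sum_(i | i != ib b) z * Tt a0 x i b)).
    by apply: ler_sum => b _; apply: ler_sum => i hi; exact: hcore.
  by rewrite sum2_mull sum2_mulr hT hth mulr1 mul1r.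
have s2 : forall i b, i != ib b -> w i b * G x i b = z.
  by move=> i b hi; have := s1 b i hi; move/(mulfI (negbT (gt_eqF (@hthp i b)))) => ->.
have s3 : forall b i, i != ib b -> Tt a0 a0 i b * (w i b * G x i b) = z * Tt a0 x i b.
  apply: sum2_eq; first by move=> b i hi; exact: hcore.
  have -> : \sum_b \sum_(i | i != ib b) Tt a0 a0 i b * (w i b * G x i b) =
            \sum_b \sum_(i | i != ib b) Tt a0 a0 i b * z.
    by apply: eq_bigr => b _; apply: eq_bigr => i hi; rewrite s2.
  by rewrite sum2_mull sum2_mulr hT hth mulr1 mul1r.
move=> i b hi; split; first exact: s2.
have [_ c2] := core_G hi (hp0 i b) (hp0 _ b) hx0.
apply: c2.
  apply: (mulfI (negbT (gt_eqF (hw hi)))).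
  by rewrite mulrCA s3 ?hi // [RHS]mulrA (hz hi).
rewrite lt_def G_ge0 // andbT; apply: contraTneq hz0 => hG0.
by rewrite -(s2 i b hi) hG0 mulr0 ltxx.
Qed.
End Key.


Lemma exists_b (a : alloc R k B) : feasible a -> exists b : 'I_B, true.
Proof.
case=> ha0 hs.
have hn1 : forall i : 'I_k, true -> 0 <= \sum_b a i b.
  by move=> i _; apply: sumr_ge0 => b _.
have hp : 0 < \sum_i \sum_b a i b by rewrite hs ltr01.
have [i [_ hi]] := sum_pos_exists hn1 hp.
have hn2 : forall b : 'I_B, true -> 0 <= a i b by move=> b _.
have [b [_ hb]] := sum_pos_exists hn2 hi.
by exists b.
Qed.


Lemma exist_opt : (0 < B)%N -> exists a0, feasible a0 /\ balance ib lam a0 /\ eqz a0.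
Proof.
move=> hB.
pose M := fun b => lam (ib b) b ^+ 2.
pose K := fun i b => cc i b * w i b / 2.
have hcol : forall b, exists v, 0 < v /\ (forall i, i != ib b -> M b * v < K i b) /\
    \sum_(i | i != ib b) M b * v ^+ 2 * lam i b ^+ 2 / (K i b - M b * v) ^+ 2 = 1.
  move=> b; have [j0 hj0] := exists_other (ib b).
  apply: (col_exists (P := fun i => i != ib b) (K := fun i => K i b)
            (L := fun i => lam i b ^+ 2) hj0).
  - by rewrite /M exprn_gt0.
  - by move=> i hi; rewrite /K divr_gt0 // mulr_gt0 ?cc_gt0 ?hw.
  - by move=> i _; rewrite exprn_gt0.
have [v hv] := boolp.choice hcol.
have hv0 : forall b, 0 < v b by move=> b; case: (hv b).
have hvK : forall i b, i != ib b -> 0 < K i b - M b * v b.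
  by move=> i b hi; case: (hv b) => _ [h _]; rewrite subr_gt0 h.
pose a1 : alloc R k B := fun i b =>
  if i == ib b then (v b)^-1 else lam i b ^+ 2 / (K i b - M b * v b).
have ha1 : forall i b, 0 < a1 i b.
  move=> i b; rewrite /a1; case: (eqVneq i (ib b)) => [_|hi]; first by rewrite invr_gt0.
  by rewrite divr_gt0 ?exprn_gt0 // hvK.
have hG1 : forall i b, i != ib b -> w i b * G a1 i b = 1.
  move=> i b hi; rewrite G_eq //.
  have -> : a1 i b = lam i b ^+ 2 / (K i b - M b * v b) by rewrite /a1 (negbTE hi).
  have -> : a1 (ib b) b = (v b)^-1 by rewrite /a1 eqxx.
  have nD := gt_eqF (hvK i b hi).
  have nv : v b != 0 by rewrite gt_eqF.
  have nl : lam i b != 0 by rewrite gt_eqF.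
  have nw : w i b != 0 by rewrite gt_eqF ?hw.
  have nc : cc i b != 0 by rewrite gt_eqF ?cc_gt0.
  rewrite /K /M in nD *.
  have n1 : cc i b * w i b + - (lam (ib b) b ^+ 2 * v b) * 2 != 0.
    have -> : cc i b * w i b + - (lam (ib b) b ^+ 2 * v b) * 2 =
       2 * (cc i b * w i b / 2 - lam (ib b) b ^+ 2 * v b) by field.
    by apply: mulf_neq0 => //; rewrite nD.
  have n2 : cc i b * w i b + - (lam (ib b) b ^+ 2 * v b) * 2 +
      lam (ib b) b ^+ 2 * v b * 2 != 0.
    by rewrite mulNr addrNK mulf_neq0.
  by field; rewrite nv n1 nl n2.
have hbal1 : balance ib lam a1.
  move=> b.
  have -> : a1 (ib b) b = (v b)^-1 by rewrite /a1 eqxx.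
  have e : forall i, i != ib b -> a1 i b ^+ 2 / lam i b ^+ 2 =
     (M b * v b ^+ 2 * lam i b ^+ 2 / (K i b - M b * v b) ^+ 2) * ((v b)^-1 ^+ 2 / M b).
    move=> i hi; rewrite /a1 (negbTE hi).
    have nD := gt_eqF (hvK i b hi).
    have nv : v b != 0 by rewrite gt_eqF.
    have nl : lam i b != 0 by rewrite gt_eqF.
    have nM : M b != 0 by rewrite gt_eqF // /M exprn_gt0.
    by field; rewrite nD nv nl nM.
  by rewrite (eq_bigr _ e) -big_distrl /= (proj2 (proj2 (hv b))) mul1r.
pose T := \sum_i \sum_b a1 i b.
have hT : 0 < T.
  rewrite lt_def; apply/andP; split; last first.
    by apply: sumr_ge0 => i _; apply: sumr_ge0 => b _; exact: ltW.
  apply/eqP => hT0.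
  pose b0 : 'I_B := Ordinal hB.
  have h1 : forall i : 'I_k, true -> 0 <= \sum_b a1 i b.
    by move=> i _; apply: sumr_ge0 => b _; exact: ltW.
  have h2 := psumr_eq0P h1 hT0 (i := ib b0) isT.
  have h3 : forall b : 'I_B, true -> 0 <= a1 (ib b0) b by move=> b _; exact: ltW.
  have := psumr_eq0P h3 h2 (i := b0) isT.
  by move/eqP; rewrite gt_eqF.
have nT : T != 0 by rewrite gt_eqF.
pose a0 : alloc R k B := fun i b => a1 i b / T.
have ha0 : forall i b, 0 < a0 i b by move=> i b; rewrite divr_gt0.
have hGa0 : forall i b, i != ib b -> G a0 i b = G a1 i b / T.
  move=> i b hi; rewrite !G_eq // /a0.
  have n1 : a1 i b != 0 by rewrite gt_eqF.
  have n2 : a1 (ib b) b != 0 by rewrite gt_eqF.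
  have n3 : lam i b ^+ 2 / a1 i b + lam (ib b) b ^+ 2 / a1 (ib b) b != 0.
    by rewrite gt_eqF // addr_gt0 // divr_gt0 // exprn_gt0.
  have -> : lam i b ^+ 2 / (a1 i b / T) + lam (ib b) b ^+ 2 / (a1 (ib b) b / T) =
      (lam i b ^+ 2 / a1 i b + lam (ib b) b ^+ 2 / a1 (ib b) b) * T.
    by field; rewrite n1 n2 nT.
  have n4 : lam i b ^+ 2 * a1 (ib b) b + lam (ib b) b ^+ 2 * a1 i b != 0.
    by rewrite gt_eqF // addr_gt0 // mulr_gt0 // exprn_gt0.
  by field; rewrite nT n1 n2 n4.
exists a0; split; [split | split].
- by move=> i b; exact: ltW.
- have -> : \sum_i \sum_b a0 i b = T / T.
    rewrite /T big_distrl; apply: eq_bigr => i _; rewrite big_distrl.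
    by apply: eq_bigr.
  by rewrite divff.
- move=> b.
  have e : forall i, a0 i b ^+ 2 / lam i b ^+ 2 = a1 i b ^+ 2 / lam i b ^+ 2 / T ^+ 2.
    move=> i; rewrite /a0.
    have nl : lam i b != 0 by rewrite gt_eqF.
    by field; rewrite nl nT.
  rewrite e (eq_bigr _ (fun i _ => e i)) -big_distrl /=.
  by rewrite hbal1.
- move=> i j b b' hi hj.
  by rewrite !hGa0 // !mulrA hG1 // hG1.
Qed.

Local Open Scope ereal_scope.

Lemma abstract (Obj : alloc R k B -> \bar R)
  (hObj : forall (e : \bar R) a, (forall i b, (0 <= a i b)%R) -> e <= Obj a <->
     forall i b, i != ib b -> e <= (w i b * G a i b)%:E)
  (hex : exists a0, feasible a0 /\ balance ib lam a0 /\ eqz a0)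
  (a : alloc R k B) : feasible a -> (optimal Obj a <-> balance ib lam a /\ eqz a).
Proof.
move=> hf.
have Obj_le : forall a' i b, feasible a' -> i != ib b -> Obj a' <= (w i b * G a' i b)%:E.
  move=> a' i b [hn _].
  by move=> hi; apply: (proj1 (hObj (Obj a') a' hn)) => //.
have Obj_ge : forall a' (z : R), feasible a' -> (forall i b, i != ib b -> (w i b * G a' i b = z)%R) ->
    z%:E <= Obj a'.
  by move=> a' z [hn _] hv; apply/hObj => // i b hi; rewrite hv.
have up : forall (a0 a' : alloc R k B) (z : R), feasible a0 -> balance ib lam a0 ->
    (forall i b, (0 < a0 i b)%R) -> (forall i b, i != ib b -> (w i b * G a0 i b = z)%R) ->
    feasible a' -> Obj a' <= z%:E.
  move=> a0 a' z hf0 hb0 hp0 hv0 hf'.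
  have [b0 _] := exists_b hf'.
  have [i0 hi0] := exists_other (ib b0).
  case E: (Obj a') => [r| |].
  - rewrite lee_fin; apply: (key hf0 hb0 hp0 hv0 hf') => i b hi.
    by rewrite -lee_fin -E; apply: Obj_le.
  - by have := Obj_le a' i0 b0 hf' hi0; rewrite E leye_eq.
  - by rewrite leNye.
split.
  case=> _ hopt.
  have [a0 [hf0 [hb0 he0]]] := hex.
  have [z [hz0 [hv0 hp0]]] := pos_of hf0 hb0 he0.
  have hge : z%:E <= Obj a by apply: le_trans (Obj_ge _ _ hf0 hv0) (hopt _ hf0).
  have hge' : forall i b, i != ib b -> (z <= w i b * G a i b)%R.
    by move=> i b hi; rewrite -lee_fin; apply: (proj1 (hObj _ a hf.1)).
  have hK := key_eq hf0 hb0 hp0 hv0 hf hz0 hge'.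
  split.
    move=> b.
    have hb : (0 < a0 (ib b) b)%R := hp0 _ b.
    have ei : forall i, i != ib b -> (a i b ^+ 2 / lam i b ^+ 2 =
        (a (ib b) b / a0 (ib b) b) ^+ 2 * (a0 i b ^+ 2 / lam i b ^+ 2))%R.
      move=> i hi; have [_ h] := hK i b hi.
      have -> : a i b = (a (ib b) b * a0 i b / a0 (ib b) b)%R.
        by rewrite h mulrK // unitfE gt_eqF.
      have nb : a0 (ib b) b != 0%R by rewrite gt_eqF.
      have nl : lam i b != 0%R by rewrite gt_eqF.
      by field; rewrite nb nl.
    rewrite (eq_bigr _ ei) -big_distrr /= -hb0.
    have nb : a0 (ib b) b != 0%R by rewrite gt_eqF.
    have nl : lam (ib b) b != 0%R by rewrite gt_eqF.
    by field; rewrite nb nl.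
  move=> i j b b' hi hj.
  by have [-> _] := hK i b hi; have [-> _] := hK j b' hj.
case=> hb he; split => // a' hf'.
have [z [hz0 [hv0 hp0]]] := pos_of hf hb he.
exact: le_trans (up _ _ _ hf hb hp0 hv0 hf') (Obj_ge _ _ hf hv0).
Qed.

End Main.
Local Open Scope ereal_scope.

Lemma bigmin_geP (R : realType) (I : finType) (P : pred I) (F : I -> \bar R) e :
  e <= \big[mine/+oo]_(i | P i) F i <-> forall i, P i -> e <= F i.
Proof.
split; first by move=> h i Pi; apply: le_trans h (bigmin_le_cond _ _ Pi).
by move=> h; apply: le_bigmin => //; exact: leey.
Qed.

Section Final.
Variables (R : realType) (k B : nat) (y lam : 'I_k -> 'I_B -> R) (p : 'I_B -> R)
    (ib : 'I_B -> 'I_k) (istar : 'I_k).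

Lemma pairE i b : inXi ib istar i b || inXiadv ib istar i b = (i != ib b).
Proof.
rewrite /inXi /inXiadv; case: (eqVneq i istar) => [->|hne] /=.
  by rewrite eq_sym.
by rewrite orbF.
Qed.

Lemma Wfun_ge1 i b : (1 <= Wfun p ib istar i b)%R.
Proof. by rewrite /Wfun; case: ifP => _; rewrite le_max lexx orbT. Qed.

Lemma WACC_gt0 i b : (0 < WACC p ib istar i b)%R.
Proof.
rewrite /WACC; case: ifP => _; first exact: ltr01.
exact: lt_le_trans ltr01 (Wfun_ge1 i b).
Qed.

Lemma WFN_gt0 i b : (0 < WFN p ib istar i b)%R.
Proof.
rewrite /WFN; case: ifP => _; first exact: ltr01.
exact: lt_le_trans ltr01 (Wfun_ge1 i b).
Qed.

Lemma eqzE W (a : alloc R k B) :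
  equalized ib istar W y lam a <-> eqz y lam ib W a.
Proof.
split=> h i j b b' hi hj; apply: h.
- by rewrite pairE. - by rewrite pairE.
- by rewrite -pairE. - by rewrite -pairE.
Qed.

Lemma WG_ge (a : alloc R k B) i b : (forall i b, (0 <= a i b)%R) ->
  (Gfun ib y lam a i b <= Wfun p ib istar i b * Gfun ib y lam a i b)%R.
Proof.
move=> h; rewrite -{1}[Gfun _ _ _ _ _ _]mul1r ler_wpM2r ?Wfun_ge1 //.
exact: G_ge0.
Qed.

Lemma objACC_ge e (a : alloc R k B) : (forall i b, (0 <= a i b)%R) ->
  e <= objACC p ib istar y lam a <->
  forall i b, i != ib b -> e <= (WACC p ib istar i b * Gfun ib y lam a i b)%:E.
Proof.
move=> ha; rewrite /objACC; split.
  rewrite !le_min => /and3P [/bigmin_geP hA /bigmin_geP hC /bigmin_geP hD] i b hi.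
  rewrite /WACC /inXiadv.
  case: (eqVneq i istar) => [ei|ne].
    have hb : ib b != istar by rewrite -ei eq_sym.
    by rewrite ei /= hb orbT mul1r; apply: hD.
  case: (eqVneq (ib b) istar) => [eb|nb] /=.
    by rewrite mul1r; apply: (hC (i, b)); rewrite /= ne eb eqxx.
  by apply: (hA (i, b)); rewrite /inXi /= ne hi.
move=> h; rewrite !le_min; apply/and3P; split.
- apply/bigmin_geP => -[i b] /= /andP [hi1 hi2].
  have := h i b hi2; rewrite /WACC /inXiadv (negbTE hi1) /= orbF.
  case: ifP => _ //; rewrite mul1r => he.
  by apply: le_trans he _; rewrite lee_fin WG_ge.
- apply/bigmin_geP => -[i b] /= /andP [hi1 hi2].
  have hi : i != ib b by rewrite (eqP hi2).
  by have := h i b hi; rewrite /WACC hi2 /= mul1r.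
- apply/bigmin_geP => b hb.
  have hi : istar != ib b by rewrite eq_sym.
  by have := h istar b hi; rewrite /WACC /inXiadv eqxx hb orbT mul1r.
Qed.

Lemma objFN_ge e (a : alloc R k B) : (forall i b, (0 <= a i b)%R) ->
  e <= objFN p ib istar y lam a <->
  forall i b, i != ib b -> e <= (WFN p ib istar i b * Gfun ib y lam a i b)%:E.
Proof.
move=> ha; rewrite /objFN; split.
  rewrite !le_min => /andP [/bigmin_geP hA /bigmin_geP hD] i b hi.
  rewrite /WFN /inXiadv.
  case: (eqVneq i istar) => [ei|ne].
    have hb : ib b != istar by rewrite -ei eq_sym.
    by rewrite ei /= hb /= mul1r; apply: hD.
  by apply: (hA (i, b)); rewrite /inXi /= ne hi.
move=> h; rewrite !le_min; apply/andP; split.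
- apply/bigmin_geP => -[i b] /= /andP [hi1 hi2].
  by have := h i b hi2; rewrite /WFN /inXiadv (negbTE hi1) /=.
- apply/bigmin_geP => b hb.
  have hi : istar != ib b by rewrite eq_sym.
  by have := h istar b hi; rewrite /WFN /inXiadv eqxx hb /= mul1r.
Qed.

End Final.

Local Close Scope ereal_scope.

Theorem theorem5 (R : realType) (k B : nat)
    (y lam : 'I_k -> 'I_B -> R) (p : 'I_B -> R)
    (ib : 'I_B -> 'I_k) (istar : 'I_k) (alpha : 'I_k -> 'I_B -> R) :
  (2 <= k)%N ->
  (forall b, 0 < p b) -> \sum_(b < B) p b = 1 ->
  (forall i b, 0 < lam i b) ->
  (* i^b is the unique argmin of y_.(theta_b) *)
  (forall b i, i != ib b -> y (ib b) b < y i b) ->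
  (* i^* is the unique argmax of sum_b p_b 1{i = i^b} *)
  (forall j, j != istar -> mass p ib j < mass p ib istar) ->
  feasible alpha ->
  (optimal (objACC p ib istar y lam) alpha <->
     balance ib lam alpha /\ equalized ib istar (WACC p ib istar) y lam alpha) /\
  (optimal (objFN p ib istar y lam) alpha <->
     balance ib lam alpha /\ equalized ib istar (WFN p ib istar) y lam alpha).
Proof.
move=> hk hp hps hlam hy _ hf.
have hB : (0 < B)%N.
  by have [b _] := exists_b hf; apply: leq_ltn_trans (leq0n b) (ltn_ord b).
split.
- rewrite eqzE.
  apply: (abstract hk hlam hy (w := WACC p ib istar)) => //.
  + by move=> i b _; exact: WACC_gt0.
  + by move=> e a ha; exact: objACC_ge.
  + by apply: exist_opt => // i b _; exact: WACC_gt0.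
- rewrite eqzE.
  apply: (abstract hk hlam hy (w := WFN p ib istar)) => //.
  + by move=> i b _; exact: WFN_gt0.
  + by move=> e a ha; exact: objFN_ge.
  + by apply: exist_opt => // i b _; exact: WFN_gt0.
Qed.
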